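(* Let $a\ge 2$ be even and let $c$ be an integer with $0<c<\frac a2$. Then $U=\{(a,-a),(c,-c),(0,0)\}\subseteq\mathcal{B}$ is unavoidable.
   Context: The bicyclic inverse semigroup is $\mathcal{B}=\{(a,b)\in\mathbb{Z}\times\mathbb{Z}\mid a\ge 0,\ a+b\ge 0\}$ with multiplication $(a,b)(c,d)=(\max\{c+d,a\}-d,\ b+d)$. A subset $U\subseteq\mathcal{B}$ is called avoidable if $\mathcal{B}$ can be partitioned into two subsets $A$ and $B$ such that no element of $U$ can be written as a product $xy$ of two distinct elements $x\neq y$ both in $A$, or both in $B$. A set is unavoidable if it is not avoidable. *)

(* Defs.v *)
From Stdlib Require Import ZArith.
Open Scope Z_scope.

(* The bicyclic inverse semigroup B = {(a,b) in Z x Z | a >= 0, a + b >= 0}. *)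
Definition inB (x : Z * Z) : Prop := 0 <= fst x /\ 0 <= fst x + snd x.

Definition bmul (x y : Z * Z) : Z * Z :=
  (Z.max (fst y + snd y) (fst x) - snd y, snd x + snd y).

(* A partition of B into two parts A, B is encoded by a colouring
   col : Z*Z -> bool (A = elements of B coloured true, B = coloured false;
   values outside B are irrelevant). *)
Definition avoidable (U : Z * Z -> Prop) : Prop :=
  exists col : Z * Z -> bool,
    forall x y : Z * Z, inB x -> inB y -> x <> y -> col x = col y ->
      ~ U (bmul x y).

Definition unavoidable (U : Z * Z -> Prop) : Prop := ~ avoidable U.

(* Main.v *)
Require Import Defs.
From Stdlib Require Import ZArith Lia Bool.
Open Scope Z_scope.

Theorem proposition3p5 (a c : Z) :
  2 <= a -> Z.Even a -> 0 < c -> 2 * c < a ->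
  unavoidable (fun u => u = (a, - a) \/ u = (c, - c) \/ u = (0, 0)).
Proof.
  intros Ha [h Hh] Hc Hac [col Hcol]. subst a.
  set (m := h - c).
  set (E0 := (m, - m)). set (Y1 := (0, m)). set (E1 := (m + c, - (m + c))).
  set (Y2 := (0, m + c)). set (E2 := (m + 2 * c, - (m + 2 * c))).
  assert (P : forall x y, inB x -> inB y -> x <> y ->
     (bmul x y = (2*h, - (2*h)) \/ bmul x y = (c, - c) \/ bmul x y = (0, 0)) ->
     col x <> col y).
  { intros x y Hx Hy Hxy Hu He. exact (Hcol x y Hx Hy Hxy He Hu). }
  assert (A1 : col E0 <> col Y1).
  { apply P; unfold E0, Y1, inB, bmul, m in *; cbn [fst snd];
      [lia | lia | intro H; apply (f_equal fst) in H; cbn [fst] in H; lia | right; right; f_equal; lia]. }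
  assert (A2 : col E1 <> col Y1).
  { apply P; unfold E1, Y1, inB, bmul, m in *; cbn [fst snd];
      [lia | lia | intro H; apply (f_equal fst) in H; cbn [fst] in H; lia | right; left; f_equal; lia]. }
  assert (A3 : col E1 <> col Y2).
  { apply P; unfold E1, Y2, inB, bmul, m in *; cbn [fst snd];
      [lia | lia | intro H; apply (f_equal fst) in H; cbn [fst] in H; lia | right; right; f_equal; lia]. }
  assert (A4 : col E2 <> col Y2).
  { apply P; unfold E2, Y2, inB, bmul, m in *; cbn [fst snd];
      [lia | lia | intro H; apply (f_equal fst) in H; cbn [fst] in H; lia | right; left; f_equal; lia]. }
  assert (A5 : col E0 <> col E2).
  { apply P; unfold E0, E2, inB, bmul, m in *; cbn [fst snd];
      [lia | lia | intro H; apply (f_equal fst) in H; cbn [fst] in H; lia | left; f_equal; lia]. }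
  destruct (col E0), (col Y1), (col E1), (col Y2), (col E2); congruence.
Qed.
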